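(* Let $p$ be a prime and $C\subseteq\mathbb{F}_p^{2n}$ a symplectic self-dual code, i.e. $C=C^{\perp_s}$. Let $J\subsetneq\{1,\dots,n\}$ be nonempty and $\overline J=\{1,\dots,n\}\setminus J$. Then for each (unit) $|\varphi\rangle\in Q(C)$, the partial trace $\mathrm{tr}_{\overline J}[|\varphi\rangle\langle\varphi|]$ is a completely mixed state on $Q(\sigma_J(C))$.
   Context: Vectors of $\mathbb{F}_p^{2n}$ are written $(\mathbf a|\mathbf b)$, coordinate pairs $(a_j,b_j)$ indexed by $j\in\{1,\dots,n\}$; symplectic form $(\mathbf a|\mathbf b)\cdot_s(\mathbf c|\mathbf d)=\mathbf a\cdot\mathbf d-\mathbf b\cdot\mathbf c$, dual $C^{\perp_s}$. For $R\subseteq\{1,\dots,n\}$: $\pi_R(\mathbf a|\mathbf b)=(a_j|b_j)_{j\in R}$ and $\sigma_R(D)=\{\pi_R(\mathbf y):\mathbf y=(\mathbf a|\mathbf b)\in D,\ \mathrm{supp}(\mathbf a)\cup\mathrm{supp}(\mathbf b)\subseteq R\}$. Let $\xi=e^{2\pi\iota/p}$, $X(a)|x\rangle=|x+a\rangle$, $Z(b)|x\rangle=\xi^{bx}|x\rangle$ on $\mathbb C^p$, $E_{(\mathbf a,\mathbf b)}=\bigotimes_jX(a_j)Z(b_j)$. For a symplectic self-orthogonal $D\subseteq\mathbb F_p^{2m}$, $Q(D)\subseteq\mathbb C^{p^m}$ is the common eigenspace $\{v:Ev=\lambda(E)v\ \forall E\in S\}$, $S$ generated by the scalars $\xi^\ell\mathcal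 I$ and the $E_{\mathbf y}$, $\mathbf y\in D$, with $\lambda$ a character, $\lambda(\xi\mathcal I)=\xi$. The character for $Q(\sigma_J(C))$ is chosen compatibly: for $\mathbf z\in\sigma_J(C)$ and $\mathbf y\in C$ with $\pi_J(\mathbf y)=\mathbf z$ and zero outside $J$, $\lambda(E_{\mathbf z})=\lambda(E_{\mathbf y})$. A completely mixed state on a subspace $V$ is the equal probabilistic mixture of the states of an orthonormal basis of $V$, i.e. $P_V/\dim V$ with $P_V$ the orthogonal projector onto $V$. *)

(* Defs.v *)
From HB Require Import structures.
From mathcomp Require Import all_boot all_order all_algebra.
Set Implicit Arguments. Unset Strict Implicit. Unset Printing Implicit Defensive.
Import Order.TTheory GRing.Theory Num.Theory.
Local Open Scope ring_scope.

Section Defs.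
Variable p : nat.

(* vectors of F_p^{2m}: coordinate pairs (a_j, b_j), j < m *)
Definition Vec (m : nat) := {ffun 'I_m -> 'F_p * 'F_p}.
(* computational basis labels |x>, x in F_p^m *)
Definition Basis (m : nat) := {ffun 'I_m -> 'F_p}.

Definition symp m (y z : Vec m) : 'F_p :=
  \sum_(j < m) ((y j).1 * (z j).2 - (y j).2 * (z j).1).

Definition sdual m (D : {set Vec m}) : {set Vec m} :=
  [set y | [forall z in D, symp y z == 0]].

(* pi_R for R = J, coordinates of J listed increasingly *)
Definition piJ n (J : {set 'I_n}) (y : Vec n) : Vec #|J| :=
  [ffun i => y (enum_val i)].

Definition sigmaJ n (J : {set 'I_n}) (D : {set Vec n}) : {set Vec #|J|} :=
  [set piJ J y | y in [set y in D | [forall j, (j \notin J) ==> (y j == (0, 0))]]].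

Variable K : numClosedFieldType.

(* xi = e^{2 pi i / p} = (e^{i pi / p})^2 *)
Definition xi : K := (p.-root (-1)) ^+ 2.

(* operators on C^{p^m}, as kernels: (E v)(u) = sum_w E u w * v w *)
Definition Op m := Basis m -> Basis m -> K.
Definition opapp m (E : Op m) (v : Basis m -> K) : Basis m -> K :=
  fun u => \sum_w E u w * v w.
Definition opmul m (E F : Op m) : Op m :=
  fun u w => \sum_x E u x * F x w.
Definition scalop m (c : K) : Op m := fun u w => if u == w then c else 0.

(* E_(a,b) = tensor_j X(a_j) Z(b_j) :  |x> |-> xi^{b.x} |x + a> *)
Definition Eop m (y : Vec m) : Op m :=
  fun u w =>
    if u == [ffun j => w j + (y j).1]
    then xi ^+ (nat_of_ord (\sum_(j < m) (y j).2 * w j)) else 0.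

Inductive inS m (D : {set Vec m}) : Op m -> Prop :=
| inS_scal (l : nat) : inS D (@scalop m (xi ^+ l))
| inS_E (y : Vec m) : y \in D -> inS D (Eop y)
| inS_mul (E F : Op m) : inS D E -> inS D F -> inS D (opmul E F).

Definition is_char m (D : {set Vec m}) (lam : Op m -> K) : Prop :=
  lam (@scalop m xi) = xi /\
  (forall E F, inS D E -> inS D F -> lam (opmul E F) = lam E * lam F) /\
  (forall E F, inS D E -> (forall u w, E u w = F u w) -> lam E = lam F).

Definition inQ m (D : {set Vec m}) (lam : Op m -> K) (v : Basis m -> K) : Prop :=
  forall E, inS D E -> forall u, opapp E v u = lam E * v u.

Definition proj m (v : Basis m -> K) : Op m := fun u w => v u * (v w)^*.

Definition resJ n (J : {set 'I_n}) (x : Basis n) : Basis #|J| :=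
  [ffun i => x (enum_val i)].

Definition ptrace n (J : {set 'I_n}) (rho : Op n) : Op #|J| :=
  fun s t => \sum_(x : Basis n) \sum_(y : Basis n |
      [&& resJ J x == s, resJ J y == t & [forall j, (j \notin J) ==> (x j == y j)]])
      rho x y.

(* completely mixed state on the subspace V: equal mixture of the states of an
   orthonormal basis of V, i.e. P_V / dim V *)
Definition completely_mixed m (V : (Basis m -> K) -> Prop) (rho : Op m) : Prop :=
  exists (d : nat) (e : 'I_d -> Basis m -> K),
    (0 < d)%N /\
    (forall i, V (e i)) /\
    (forall i j, \sum_x e i x * (e j x)^* = (i == j)%:R) /\
    (forall v, V v -> exists c : 'I_d -> K, forall x, v x = \sum_i c i * e i x) /\
    (forall s t, rho s t = d%:R^-1 * \sum_i e i s * (e i t)^*).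

End Defs.

(* Main.v *)
Require Import Defs.
From HB Require Import structures.
From mathcomp Require Import all_boot all_order all_algebra.
From mathcomp Require Import sesquilinear spectral ring.
Import Order.TTheory GRing.Theory Num.Theory.
Local Open Scope ring_scope.

Module Aux.
Set Implicit Arguments. Unset Strict Implicit. Unset Printing Implicit Defensive.

Section XiFacts.
Variable K : numClosedFieldType.
Variable p : nat.
Hypothesis pP : prime p.

Local Notation xi := (xi p K).

Lemma p_gt1 : (1 < p)%N. Proof. exact: prime_gt1. Qed.

Lemma xi_p : xi ^+ p = 1.
Proof.
rewrite /Defs.xi -exprM mulnC exprM rootCK ?prime_gt0 //.
by rewrite expr2 mulrNN mulr1.
Qed.

Lemma xi_neq1 : xi != 1.
Proof.
apply/eqP; rewrite /Defs.xi => h.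
have r1 : (p.-root (-1 : K)) ^+ p = -1 by rewrite rootCK ?prime_gt0.
have : ((p.-root (-1 : K)) - 1) * ((p.-root (-1 : K)) + 1) = 0.
  by rewrite mulrDr !mulrBl -expr2 h mul1r mulr1 mul1r addrA subrK subrr.
move/eqP; rewrite mulf_eq0 => /orP[|].
  rewrite subr_eq0 => /eqP h1; move: r1; rewrite h1 expr1n => /eqP.
  rewrite -subr_eq0 opprK; have -> : (1 + 1 : K) = 2%:R by []. by rewrite pnatr_eq0.
rewrite addr_eq0 => /eqP h1.
have := rootC_lt0 (-1 : K) p_gt1; rewrite h1 ltrN10 //.
Qed.

Lemma normxi : `|xi| = 1.
Proof.
apply/eqP; rewrite -(pexpr_eq1 (prime_gt0 pP)) // -normrX xi_p normr1 //.
Qed.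

Lemma xi_conj : xi * xi^* = 1.
Proof. by rewrite -normCK normxi expr1n. Qed.

Definition ee (k : 'F_p) : K := xi ^+ (nat_of_ord k).

Lemma valFD (k l : 'F_p) : nat_of_ord (k + l) = ((k + l) %% p)%N.
Proof. by rewrite /=; congr (_ %% _)%N; exact: Fp_cast. Qed.

Lemma valFM (k l : 'F_p) : nat_of_ord (k * l) = ((k * l) %% p)%N.
Proof. by rewrite /=; congr (_ %% _)%N; exact: Fp_cast. Qed.

Lemma ee0 : ee 0 = 1.
Proof. by rewrite /ee /= expr0. Qed.

Lemma eeD k l : ee (k + l) = ee k * ee l.
Proof. by rewrite /ee valFD expr_mod ?xi_p // exprD. Qed.

Lemma eeN k : ee (- k) * ee k = 1.
Proof. by rewrite -eeD addNr ee0. Qed.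

Lemma ee_conj k : (ee k)^* = ee (- k).
Proof.
have h : ee k * (ee k)^* = 1.
  by rewrite /ee rmorphXn -exprMn xi_conj expr1n.
have hn : ee k != 0 by apply/eqP => h0; move: h; rewrite h0 mul0r => /eqP; rewrite eq_sym oner_eq0.
apply: (mulfI hn); transitivity (1 : K); first exact: h. by rewrite mulrC eeN.
Qed.

Lemma eeC k : ee k * (ee k)^* = 1.
Proof. by rewrite ee_conj mulrC eeN. Qed.

Lemma ee_eq1 k : ee k = 1 -> k = 0.
Proof.
move=> h; apply/eqP; apply: contraT => kn0.
have hk : k * k^-1 = 1 by rewrite mulfV.
have : ee (k * k^-1) = 1.
  by rewrite /ee valFM expr_mod ?xi_p // exprM; move: h; rewrite /ee => ->; rewrite expr1n.
rewrite hk /ee.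
have -> : nat_of_ord (1 : 'F_p) = 1%N.
  by rewrite /= Fp_cast // modn_small // p_gt1.
rewrite expr1 => /eqP; rewrite (negbTE xi_neq1) //.
Qed.

End XiFacts.

Section Gen.
Variable K : numClosedFieldType.
Variable p : nat.
Hypothesis pP : prime p.
Local Notation xi := (xi p K).

Lemma xi_neq0 : xi != 0.
Proof. apply/eqP => h; have := xi_p K pP; rewrite h expr0n. have /negbTE -> : p != 0%N by rewrite -lt0n prime_gt0. by move/eqP; rewrite eq_sym oner_eq0. Qed.

Variable m : nat.
Local Notation B := (Basis p m).
Local Notation sc c := (@scalop p K m c).

Lemma opmul_scal (a b : K) : forall u w, opmul (sc a) (sc b) u w = sc (a * b) u w.
Proof.
move=> u w; rewrite /opmul /scalop (bigD1 u) //= eqxx big1 ?addr0.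
  by case: eqP => _; rewrite ?mulr0.
by move=> x /negbTE; rewrite eq_sym => ->; rewrite mul0r.
Qed.

Lemma lam_scal (D : {set Vec p m}) lam : is_char D lam -> forall l, lam (sc (xi ^+ l)) = xi ^+ l.
Proof.
case=> h1 [hM hE].
have i0 := @inS_scal p K m D 0; have i1 := @inS_scal p K m D 1.
have s1 : lam (sc 1) = 1.
  have e1 : lam (sc xi) = lam (sc 1) * lam (sc xi).
    transitivity (lam (opmul (sc (xi^+0)) (sc (xi^+1)))).
      by symmetry; apply: hE; [exact: inS_mul | move=> u w; rewrite opmul_scal mul1r].
    exact: hM.
  move: e1; rewrite h1 => /eqP; rewrite -subr_eq0 -{1}(mul1r xi) -mulrBl mulf_eq0 (negbTE xi_neq0) orbF subr_eq0 => /eqP.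
  by move=> <-.
elim=> [|l IH]; first exact: s1.
have il := @inS_scal p K m D l.
transitivity (lam (opmul (sc (xi^+1)) (sc (xi^+l)))).
  by symmetry; apply: hE; [exact: inS_mul | move=> u w; rewrite opmul_scal -exprS].
by rewrite hM // h1 IH exprS.
Qed.

Lemma inQ_gen (D : {set Vec p m}) lam (v : B -> K) : is_char D lam ->
  (forall y, y \in D -> forall u, opapp (Eop K y) v u = lam (Eop K y) * v u) -> inQ D lam v.
Proof.
move=> hc hy E; elim=> {E} [l|y yD|E F iE IHE iF IHF] u.
- rewrite (lam_scal hc) /opapp /scalop (bigD1 u) //= eqxx big1 ?addr0 //.
  by move=> x; rewrite eq_sym => /negbTE ->; rewrite mul0r.
- exact: hy.
- case: hc => _ [hM _]; rewrite (hM _ _ iE iF).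
  transitivity (\sum_x E u x * opapp F v x).
    rewrite /opapp /opmul; under eq_bigr do rewrite mulr_suml.
    rewrite exchange_big; apply: eq_bigr => x _; rewrite mulr_sumr.
    by apply: eq_bigr => w _; rewrite mulrA.
  under eq_bigr do rewrite IHF.
  transitivity (lam F * opapp E v u).
    by rewrite /opapp mulr_sumr; apply: eq_bigr => x _; rewrite mulrCA.
  by rewrite IHE mulrA [lam F * _]mulrC.
Qed.
End Gen.

Section Pauli.
Variable K : numClosedFieldType.
Variable p : nat.
Hypothesis pP : prime p.
Local Notation xi := (xi p K).
Local Notation ee := (@ee K p).

Definition Xv m (y : Vec p m) : Basis p m := [ffun j => (y j).1].
Definition Zv m (y : Vec p m) : Basis p m := [ffun j => (y j).2].
Definition dot m (b x : Basis p m) : 'F_p := \sum_j b j * x j.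

Lemma EopE m (y : Vec p m) u w :
  Eop K y u w = if u == w + Xv y then ee (dot (Zv y) w) else 0.
Proof.
rewrite /Eop.
have -> : [ffun j => w j + (y j).1] = w + Xv y by apply/ffunP => j; rewrite !ffunE.
by rewrite /dot; under [in RHS]eq_bigr do rewrite ffunE.
Qed.

Lemma dotDr m (b x a : Basis p m) : dot b (x + a) = dot b x + dot b a.
Proof. by rewrite /dot -big_split; apply: eq_bigr => j _; rewrite ffunE mulrDr. Qed.
Lemma dotDl m (b x a : Basis p m) : dot (x + a) b = dot x b + dot a b.
Proof. by rewrite /dot -big_split; apply: eq_bigr => j _; rewrite ffunE mulrDl. Qed.
Lemma dotNr m (b x : Basis p m) : dot b (- x) = - dot b x.
Proof. by rewrite /dot -sumrN; apply: eq_bigr => j _; rewrite ffunE mulrN. Qed.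
Lemma dotNl m (b x : Basis p m) : dot (- x) b = - dot x b.
Proof. by rewrite /dot -sumrN; apply: eq_bigr => j _; rewrite ffunE mulNr. Qed.
Lemma dotC m (b x : Basis p m) : dot b x = dot x b.
Proof. by rewrite /dot; apply: eq_bigr => j _; rewrite mulrC. Qed.
Lemma dot0r m (b : Basis p m) : dot 0 b = 0.
Proof. by rewrite /dot big1 // => j _; rewrite ffunE mul0r. Qed.
Lemma dotr0 m (b : Basis p m) : dot b 0 = 0.
Proof. by rewrite /dot big1 // => j _; rewrite ffunE mulr0. Qed.

Lemma charsum m (c : Basis p m) :
  \sum_(b : Basis p m) ee (dot b c) = if c == 0 then #|{: Basis p m}|%:R else 0.
Proof.
case: eqP => [->|/eqP cn0].
  by under eq_bigr do rewrite dotr0 ee0; rewrite sumr_const.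
have [j cj] : exists j, c j != 0.
  apply/existsP; apply: contraR cn0 => /existsPn h; apply/eqP/ffunP => j.
  by rewrite ffunE; apply/eqP; move: (h j); rewrite negbK.
pose d : Basis p m := [ffun i => (i == j)%:R].
have dc : dot d c = c j.
  rewrite /dot (bigD1 j) //= big1 ?addr0; first by rewrite ffunE eqxx mul1r.
  by move=> i /negbTE ij; rewrite ffunE ij mul0r.
set S := \sum_b _.
have : S = S * ee (c j).
  rewrite {1}/S (reindex_inj (addIr d)) /= /S mulr_suml.
  by apply: eq_bigr => b _; rewrite dotDl eeD // dc.
move/eqP; rewrite -subr_eq0 -{1}(mulr1 S) -mulrBr mulf_eq0 => /orP[/eqP //|].
rewrite subr_eq0 => /eqP/esym/(ee_eq1 pP) cj0; by rewrite cj0 eqxx in cj.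
Qed.

Definition mkv m (ab : Basis p m * Basis p m) : Vec p m := [ffun j => (ab.1 j, ab.2 j)].

Lemma sum_vec m (F : Vec p m -> K) :
  \sum_z F z = \sum_(a : Basis p m) \sum_(b : Basis p m) F (mkv (a, b)).
Proof.
rewrite pair_big /=.
rewrite (reindex (@mkv m)) /=.
  by apply: eq_bigr => [[a b]] _.
apply: onW_bij; exists (fun z => (Xv z, Zv z)).
  by move=> [a b]; congr pair; apply/ffunP => j; rewrite !ffunE.
by move=> z; apply/ffunP => j; rewrite !ffunE; case: (z j).
Qed.

Lemma Xmkv m a b : Xv (@mkv m (a, b)) = a.
Proof. by apply/ffunP => j; rewrite !ffunE. Qed.
Lemma Zmkv m a b : Zv (@mkv m (a, b)) = b.
Proof. by apply/ffunP => j; rewrite !ffunE. Qed.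

Lemma kron m (u w s t : Basis p m) :
  \sum_(z : Vec p m) (Eop K z u w)^* * Eop K z s t
  = if (u == s) && (w == t) then #|{: Basis p m}|%:R else 0.
Proof.
rewrite sum_vec.
have step : forall a, \sum_b (Eop K (mkv (a, b)) u w)^* * Eop K (mkv (a, b)) s t
   = if (u == w + a) && (s == t + a) then \sum_(b : Basis p m) ee (dot b (t - w)) else 0.
  move=> a; under eq_bigr do rewrite !EopE !Xmkv !Zmkv.
  case: (u =P w + a) => _ /=; last by rewrite big1 // => b _; rewrite conjC0 mul0r.
  case: (s =P t + a) => _ /=; last by rewrite big1 // => b _; rewrite mulr0.
  by apply: eq_bigr => b _; rewrite ee_conj // -eeD // dotDr dotNr addrC.
under eq_bigr do rewrite step charsum //.
case: (t =P w) => [->|tw]; last first.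
  rewrite big1; last by move=> a _; rewrite subr_eq0; case: (t =P w) => //; case: ifP.
  by case: eqP => // _; case: eqP => // e; rewrite e in tw.
rewrite subrr eqxx (bigD1 (u - w)) //=.
have -> : w + (u - w) = u by rewrite addrC subrK.
rewrite eqxx /= andbT eq_sym big1 ?addr0 ?eqxx //.
move=> a ha; case: (u =P w + a) => //= e.
by rewrite e addrC addKr eqxx in ha.
Qed.

Lemma card_basis_neq0 m : (#|{: Basis p m}|%:R : K) != 0.
Proof. by rewrite pnatr_eq0 -lt0n; apply/card_gt0P; exists 0. Qed.

Lemma pauli_exp m (M : Op p K m) s t :
  M s t = (#|{: Basis p m}|%:R)^-1 *
    \sum_(z : Vec p m) (\sum_u \sum_w (Eop K z u w)^* * M u w) * Eop K z s t.
Proof.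
transitivity ((#|{: Basis p m}|%:R)^-1 *
   (\sum_u \sum_w M u w * \sum_(z : Vec p m) (Eop K z u w)^* * Eop K z s t)); last first.
  congr (_ * _); under [LHS]eq_bigr do under eq_bigr do rewrite mulr_sumr.
  under [LHS]eq_bigr do rewrite exchange_big.
  rewrite [LHS]exchange_big; symmetry; apply: eq_bigr => z _; rewrite mulr_suml.
  apply: eq_bigr => u _; rewrite mulr_suml; apply: eq_bigr => w _.
  by rewrite mulrCA mulrA.
under eq_bigr do under eq_bigr do rewrite kron.
rewrite (bigD1 s) //= [X in _ + X]big1 ?addr0; last first.
  by move=> u /negbTE us; rewrite big1 // => w _; rewrite us mulr0.
rewrite (bigD1 t) //= big1 ?addr0; last first.
  by move=> w /negbTE wt; rewrite eqxx wt mulr0.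
by rewrite !eqxx /= mulrC -mulrA mulfV ?mulr1 // card_basis_neq0.
Qed.

End Pauli.

Section Spec.
Local Open Scope sesquilinear_scope.
Variable K : numClosedFieldType.
Variable p : nat.
Variable m : nat.
Local Notation T := (Basis p m).

Lemma sum_T (F : T -> K) : \sum_x F x = \sum_(i < #|{: T}|) F (enum_val i).
Proof. by rewrite (reindex _ (onW_bij _ (enum_val_bij T))). Qed.

Lemma spectral_mixed (V : (T -> K) -> Prop) (rho : Op p K m) :
  (forall v w, (forall x, v x = w x) -> V v -> V w) ->
  (forall s t, rho t s = (rho s t)^*) ->
  \sum_s rho s s = 1 ->
  (forall u, V (fun s => \sum_t rho s t * u t)) ->
  (forall a v, V v -> V (fun s => a * v s)) ->
  (exists c, forall v, V v -> forall s, \sum_t rho s t * v t = c * v s) ->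
  completely_mixed V rho.
Proof.
move=> Vext herm tr1 range scal [c Hc].
pose N := #|{: T}|.
pose M : 'M[K]_N := \matrix_(i, j) rho (enum_val i) (enum_val j).
have MH : M ^t* = M by apply/matrixP => i j; rewrite !mxE (herm (enum_val i)) conjCK.
have Mn : M \is normalmx by apply/normalmxP; rewrite MH.
have Mdec := orthomx_spectralP Mn.
set P := spectralmx M in Mdec; set sp := spectral_diag M in Mdec.
have Pu : P \is unitarymx := spectral_unitarymx M.
rewrite invmx_unitary // in Mdec.
have Ment : forall i j, M i j = \sum_k (P k i)^* * sp 0 k * P k j.
  move=> i j; rewrite Mdec mul_mx_diag !mxE; apply: eq_bigr => k _.
  by rewrite !mxE.
have Port : forall i j, \sum_l P i l * (P j l)^* = (i == j)%:R.
  move=> i j; move/unitarymxP: Pu => /matrixP /(_ i j); rewrite !mxE => <-.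
  by apply: eq_bigr => l _; rewrite !mxE.
pose f k (x : T) := (P k (enum_rank x))^*.
have fv : forall k l, f k (enum_val l) = (P k l)^* by move=> k l; rewrite /f enum_valK.
have rhoE : forall s t, rho s t = \sum_k sp 0 k * f k s * (f k t)^*.
  move=> s t; rewrite -[s]enum_rankK -[t]enum_rankK.
  have := Ment (enum_rank s) (enum_rank t); rewrite mxE => ->.
  by apply: eq_bigr => k _; rewrite /f !enum_valK conjCK [_ * sp 0 k]mulrC.
have fort : forall i j, \sum_x f i x * (f j x)^* = (i == j)%:R.
  move=> i j; rewrite sum_T; under eq_bigr do rewrite !fv conjCK.
  by rewrite eq_sym -Port; apply: eq_bigr => l _; rewrite mulrC.
have feig : forall k s, \sum_t rho s t * f k t = sp 0 k * f k s.
  move=> k s; under eq_bigr do rewrite rhoE mulr_suml.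
  rewrite exchange_big /= (bigD1 k) //= [X in _ + X]big1 ?addr0.
    rewrite (eq_bigr (fun t => sp 0 k * f k s * (f k t * (f k t)^*))); last first.
      by move=> t _; ring.
    by rewrite -mulr_sumr fort eqxx mulr1.
  move=> l lk.
  rewrite (eq_bigr (fun t => sp 0 l * f l s * (f k t * (f l t)^*))); last first.
    by move=> t _; ring.
  by rewrite -mulr_sumr fort eq_sym (negbTE lk) mulr0.
have fV : forall k, sp 0 k != 0 -> V (f k).
  move=> k hk; apply: (Vext (fun s => (sp 0 k)^-1 * \sum_t rho s t * f k t)); last exact: scal (range _).
  by move=> x; rewrite feig mulrA mulVf ?mul1r.
have spc : forall k, sp 0 k != 0 -> sp 0 k = c.
  move=> k hk; have [s fs] : exists s, f k s != 0.
    apply/existsP; apply: contraT => /existsPn h0.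
    have := fort k k; rewrite eqxx big1 => [/eqP|x _]; first by rewrite eq_sym oner_eq0.
    by move: (h0 x); rewrite negbK => /eqP ->; rewrite mul0r.
  have := Hc _ (fV k hk) s; rewrite feig => /eqP; rewrite -subr_eq0 -mulrBl mulf_eq0 (negbTE fs) orbF subr_eq0.
  by move/eqP.
pose S := [set k | sp 0 k != 0].
pose d := #|S|.
pose e (i : 'I_d) := f (enum_val i).
have rhoS : forall s t, rho s t = c * \sum_(i < d) e i s * (e i t)^*.
  move=> s t; rewrite rhoE (bigID (mem S)) /= [X in _ + X]big1 ?addr0; last first.
    by move=> k; rewrite inE negbK => /eqP ->; rewrite !mul0r.
  rewrite big_enum_val mulr_sumr; apply: eq_bigr => i _.
  have : enum_val i \in S := enum_valP i.
  by rewrite inE => h; rewrite spc // mulrA.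
have dc : d%:R * c = 1.
  transitivity (\sum_s rho s s); last exact: tr1.
  under [RHS]eq_bigr do rewrite rhoS.
  rewrite -mulr_sumr mulrC; congr (_ * _); rewrite exchange_big /=.
  under [RHS]eq_bigr do rewrite /e fort eqxx.
  by rewrite sumr_const card_ord.
have cn0 : c != 0 by apply/eqP => c0; move: dc; rewrite c0 mulr0 => /eqP; rewrite eq_sym oner_eq0.
have dn0 : (d%:R : K) != 0 by apply/eqP => d0; move: dc; rewrite d0 mul0r => /eqP; rewrite eq_sym oner_eq0.
have cd : c = d%:R^-1 by apply: (mulfI dn0); rewrite dc mulfV.
exists d, e; split.
  by rewrite lt0n; apply: contraNneq dn0 => ->.
split.
  by move=> i; apply: fV; have := enum_valP i; rewrite inE.
split.
  by move=> i j; rewrite /e fort (inj_eq enum_val_inj).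
split.
  move=> v hv; exists (fun i => \sum_t (e i t)^* * v t) => x.
  have h := Hc v hv x.
  transitivity (c^-1 * (c * v x)); first by rewrite mulrA mulVf ?mul1r.
  rewrite -h; under eq_bigr do rewrite rhoS -mulrA.
  rewrite -mulr_sumr mulrA mulVf ?mul1r //.
  under eq_bigr do rewrite mulr_suml.
  rewrite exchange_big; apply: eq_bigr => i _; rewrite mulr_suml.
  by apply: eq_bigr => t _; ring.
by move=> s t; rewrite rhoS cd.
Qed.
End Spec.
Section Main.
Variable K : numClosedFieldType.
Variables (p n : nat).
Hypothesis pP : prime p.
Variable C : {set Vec p n}.
Hypothesis C_selfdual : C = sdual C.
Variable J : {set 'I_n}.
Variable lam : Op p K n -> K.
Hypothesis lam_char : is_char C lam.
Variable lam' : Op p K #|J| -> K.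
Hypothesis lam'_char : is_char (sigmaJ J C) lam'.
Hypothesis compat : forall (z : Vec p #|J|) (y : Vec p n),
      z \in sigmaJ J C -> y \in C ->
      (forall j, j \notin J -> y j = (0, 0)) -> piJ J y = z ->
      lam' (@Eop p K _ z) = lam (@Eop p K _ y).
Variable phi : Basis p n -> K.
Hypothesis phi_in : inQ C lam phi.
Hypothesis phi_unit : \sum_x phi x * (phi x)^* = 1.

Local Notation ee := (@ee K p).
Local Notation m := #|J|.

Lemma star g : g \in C -> forall w,
  ee (dot (Zv g) w) * phi w = lam (Eop K g) * phi (w + Xv g).
Proof.
move=> gC w; have := phi_in (inS_E K gC) (w + Xv g); rewrite /opapp.
rewrite (bigD1 w) //= EopE eqxx big1 ?addr0 => [<- //|w' hw'].
by rewrite EopE (inj_eq (addIr _)) eq_sym (negbTE hw') mul0r.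
Qed.

Lemma chi_norm g : g \in C -> lam (Eop K g) * (lam (Eop K g))^* = 1.
Proof.
move=> gC; set chi := lam (Eop K g).
have e1 : \sum_w (ee (dot (Zv g) w) * phi w) * (ee (dot (Zv g) w) * phi w)^* = 1.
  rewrite -phi_unit; apply: eq_bigr => w _; rewrite rmorphM.
  transitivity ((ee (dot (Zv g) w) * (ee (dot (Zv g) w))^*) * (phi w * (phi w)^*)); first by ring.
  by rewrite eeC // mul1r.
rewrite -e1; under eq_bigr do rewrite star //.
under eq_bigr do rewrite rmorphM.
transitivity (chi * chi^* * \sum_(w : Basis p n) phi (w + Xv g) * (phi (w + Xv g))^*).
  have hs : \sum_(w : Basis p n) phi (w + Xv g) * (phi (w + Xv g))^* = 1.
    by rewrite -phi_unit; symmetry; rewrite (reindex_inj (addIr (Xv g))).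
  by rewrite hs mulr1.
by rewrite mulr_sumr; apply: eq_bigr => w _; rewrite /chi; ring.
Qed.

Definition gam (y : Vec p n) :=
  \sum_x (ee (dot (Zv y) x))^* * phi (x + Xv y) * (phi x)^*.

Lemma symp_dot (y g : Vec p n) : symp y g = dot (Xv y) (Zv g) - dot (Zv y) (Xv g).
Proof.
rewrite /symp /dot -sumrB; apply: eq_bigr => j _; by rewrite !ffunE.
Qed.

Lemma gam0 y : y \notin C -> gam y = 0.
Proof.
move=> yC; have : y \notin sdual C by rewrite -C_selfdual.
rewrite inE => /forallPn [g]; rewrite negb_imply => /andP[gC sg].
set a := Xv y; set b := Zv y; set a' := Xv g; set b' := Zv g.
set chi := lam (Eop K g).
set s' := dot b' a - dot b a'.
have ss : s' = symp y g by rewrite symp_dot /s' dotC.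
have e : gam y = ee s' * gam y.
  rewrite {1}/gam (reindex_inj (addIr a')) /= -[LHS]mul1r -(chi_norm gC) -/chi.
  rewrite /gam !mulr_sumr; apply: eq_bigr => x _.
  have h1 : chi * phi (x + a' + a) = ee (dot b' (x + a)) * phi (x + a).
    by rewrite star // addrAC.
  have h2 : chi * phi (x + a') = ee (dot b' x) * phi x by rewrite star.
  transitivity ((ee (dot b (x + a')))^* * (chi * phi (x + a' + a)) * (chi * phi (x + a'))^*).
    by rewrite rmorphM; ring.
  rewrite h1 h2 rmorphM.
  have hE : (ee (dot b (x + a')))^* * ee (dot b' (x + a)) * (ee (dot b' x))^* = ee s' * (ee (dot b x))^*.
    rewrite !ee_conj // -!eeD //; congr (ee _); rewrite /s' !dotDr; ring.
  transitivity (((ee (dot b (x + a')))^* * ee (dot b' (x + a)) * (ee (dot b' x))^*) * (phi (x + a) * (phi x)^*)).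
    by ring.
  by rewrite hE; ring.
move/eqP: e; rewrite -subr_eq0 -{1}(mul1r (gam y)) -mulrBl mulf_eq0 => /orP[|/eqP //].
by rewrite subr_eq0 => /eqP/esym/(ee_eq1 pP) s0; move: sg; rewrite -ss s0 eqxx.
Qed.

Definition agree (x y : Basis p n) := [forall j, (j \notin J) ==> (x j == y j)].

Lemma agree_sym x y : agree x y = agree y x.
Proof. by apply/forallP/forallP => h j; rewrite eq_sym; apply: h. Qed.

Lemma res_agree_eq x y : (resJ J x == resJ J y) && agree x y = (x == y).
Proof.
apply/andP/eqP => [[/eqP hr /forallP ha]|->]; last first.
  by rewrite eqxx; split => //; apply/forallP => j; rewrite eqxx implybT.
apply/ffunP => j; case: (boolP (j \in J)) => hj.
  have := congr1 (fun f : Basis p m => f (enum_rank_in hj j)) hr; rewrite !ffunE enum_rankK_in //.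
by move/implyP: (ha j) => /(_ hj)/eqP.
Qed.

Section ZeroOff.
Variables (y : Vec p n) (z : Vec p m).
Hypothesis hy0 : forall j, j \notin J -> y j = (0, 0).
Hypothesis hz : piJ J y = z.

Lemma dotJ x : dot (Zv y) x = dot (Zv z) (resJ J x).
Proof.
rewrite /dot (bigID (fun j => j \in J)) /= [X in _ + X]big1 ?addr0; last first.
  by move=> j hj; rewrite ffunE hy0 // mul0r.
rewrite big_enum_val; apply: eq_bigr => i _; by rewrite !ffunE -hz ffunE.
Qed.

Lemma resJ_add x : resJ J (x + Xv y) = resJ J x + Xv z.
Proof. by apply/ffunP => i; rewrite !ffunE -hz ffunE. Qed.

Lemma agree_add x w : agree (x + Xv y) w = agree x w.
Proof.
apply/forallP/forallP => h j; move: (h j); case: (boolP (j \in J)) => //= hj.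
  by rewrite !ffunE hy0 // addr0.
by rewrite !ffunE hy0 // addr0.
Qed.

End ZeroOff.

Definition ext (z : Vec p m) : Vec p n :=
  [ffun j => if [pick i | enum_val i == j] is Some i then z i else (0, 0)].

Lemma ext0 z j : j \notin J -> ext z j = (0, 0).
Proof.
move=> hj; rewrite ffunE; case: pickP => // i /eqP hi.
by move: (enum_valP i); rewrite hi (negbTE hj).
Qed.

Lemma piJ_ext z : piJ J (ext z) = z.
Proof.
apply/ffunP => i; rewrite !ffunE; case: pickP => [i' /eqP /enum_val_inj -> //|].
by move/(_ i); rewrite eqxx.
Qed.

Lemma ext_sigma z : ext z \in C -> z \in sigmaJ J C.
Proof.
move=> hC; apply/imsetP; exists (ext z); last by rewrite piJ_ext.
by rewrite inE hC /=; apply/forallP => j; apply/implyP => hj; rewrite ext0.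
Qed.

Lemma sigma_inv z : z \in sigmaJ J C ->
  exists2 y, y \in C & (forall j, j \notin J -> y j = (0, 0)) /\ piJ J y = z.
Proof.
case/imsetP => y; rewrite inE => /andP[yC /forallP h] ->; exists y => //; split => //.
by move=> j hj; move/implyP: (h j) => /(_ hj)/eqP.
Qed.

Local Notation rho := (@ptrace p K n J (proj phi)).

Lemma rho_expand s t : rho s t = \sum_x \sum_y
  (if [&& agree x y, resJ J x == s & resJ J y == t] then phi x * (phi y)^* else 0).
Proof.
rewrite /ptrace; apply: eq_bigr => x _; rewrite big_mkcond; apply: eq_bigr => y _.
rewrite /proj /agree; by case: (resJ J x == s); case: (resJ J y == t); case: [forall _, _].
Qed.

Lemma rho_herm s t : rho t s = (rho s t)^*.
Proof.
rewrite !rho_expand rmorph_sum exchange_big; apply: eq_bigr => y _.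
rewrite rmorph_sum; apply: eq_bigr => x _; rewrite agree_sym.
case: (agree y x); case: (resJ J x == t); case: (resJ J y == s) => /=; rewrite ?conjC0 //.
by rewrite rmorphM /= conjCK mulrC.
Qed.

Lemma rho_trace : \sum_s rho s s = 1.
Proof.
under eq_bigr do rewrite rho_expand.
rewrite exchange_big /= -phi_unit; apply: eq_bigr => x _.
rewrite exchange_big /= (bigD1 x) //= [X in _ + X]big1 ?addr0.
  rewrite (bigD1 (resJ J x)) //= big1 ?addr0.
    by rewrite /agree eqxx; have -> : [forall j, (j \notin J) ==> (x j == x j)] by apply/forallP => j; rewrite eqxx implybT.
  by move=> s hs; case: ifP => // /and3P[_ /eqP h _]; rewrite h eqxx in hs.
move=> y hy; apply: big1 => s _.
case: ifP => // /and3P[ha /eqP h1 /eqP h2].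
by move: hy; rewrite -res_agree_eq h1 h2 eqxx agree_sym ha.
Qed.

Lemma rho_row z : z \in sigmaJ J C -> forall s' t,
  \sum_s Eop K z s' s * rho s t = lam' (Eop K z) * rho s' t.
Proof.
move=> zG s' t; have [y yC [hy0 hz]] := sigma_inv zG.
rewrite (compat zG yC hy0 hz).
transitivity (\sum_x \sum_y0 (if agree x y0 && (resJ J y0 == t)
   then Eop K z s' (resJ J x) * (phi x * (phi y0)^*) else 0)).
  under eq_bigr do rewrite rho_expand mulr_sumr.
  rewrite exchange_big; apply: eq_bigr => x _.
  under eq_bigr do rewrite mulr_sumr.
  rewrite exchange_big; apply: eq_bigr => y0 _.
  rewrite (bigD1 (resJ J x)) //= big1 ?addr0.
    by rewrite eqxx /=; case: ifP => //; rewrite mulr0.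
  by move=> s /negbTE hs; rewrite eq_sym hs andbF /= mulr0.
set H := fun x y0 => (if [&& agree x y0, resJ J x == s' & resJ J y0 == t] then phi x * (phi y0)^* else 0).
transitivity (lam (Eop K y) * \sum_(x : Basis p n) \sum_(y0 : Basis p n) H (x + Xv y) y0).
  rewrite mulr_sumr; apply: eq_bigr => x _; rewrite mulr_sumr; apply: eq_bigr => y0 _.
  rewrite /H agree_add // (resJ_add hz) EopE.
  case: (agree x y0) => //=; last by rewrite mulr0.
  case: (resJ J y0 == t); rewrite ?andbF /= ?mulr0 //.
  rewrite andbT eq_sym; case: eqP => _; last by rewrite mul0r mulr0.
  by rewrite mulrA -(dotJ hy0 hz) star // mulrA.

congr (_ * _); rewrite rho_expand; symmetry; rewrite (reindex_inj (addIr (Xv y))) //.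
Qed.

Lemma rho_beta z :
  \sum_u \sum_w (Eop K z u w)^* * rho u w = gam (ext z).
Proof.
have hy0 := ext0 z; have hz := piJ_ext z.
transitivity (\sum_x \sum_y (if agree x y then (Eop K z (resJ J x) (resJ J y))^* * (phi x * (phi y)^*) else 0)).
  under eq_bigr do under eq_bigr do rewrite rho_expand mulr_sumr.
  under eq_bigr do rewrite exchange_big.
  rewrite exchange_big; apply: eq_bigr => x _.
  under eq_bigr do under eq_bigr do rewrite mulr_sumr.
  under eq_bigr do rewrite exchange_big.
  rewrite exchange_big; apply: eq_bigr => y _.
  rewrite (bigD1 (resJ J x)) //= [X in _ + X]big1 ?addr0; last first.
    by move=> u /negbTE hu; apply: big1 => w _; rewrite eq_sym hu andbF /= mulr0.
  rewrite (bigD1 (resJ J y)) //= big1 ?addr0; last first.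
    by move=> w /negbTE hw; rewrite eqxx eq_sym hw !andbF /= mulr0.
  by rewrite !eqxx !andbT; case: ifP; rewrite ?mulr0.
rewrite exchange_big /=; apply: eq_bigr => y _.
rewrite (bigD1 (y + Xv (ext z))) //= big1 ?addr0; last first.
  move=> x hx; case: ifP => // ha; rewrite EopE.
  case: eqP => [h|]; last by rewrite conjC0 mul0r.
  move: hx; rewrite -res_agree_eq (resJ_add hz) h eqxx /= agree_sym (agree_add hy0) agree_sym ha //.
rewrite (agree_add hy0) /agree.
have -> : [forall j, (j \notin J) ==> (y j == y j)] by apply/forallP => j; rewrite eqxx implybT.
rewrite EopE (resJ_add hz) eqxx -(dotJ hy0 hz); ring.
Qed.

Local Notation G := (sigmaJ J C).

Lemma rho_eig : exists c, forall v, inQ G lam' v -> forall s,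
  \sum_t rho s t * v t = c * v s.
Proof.
pose N : K := #|{: Basis p m}|%:R.
exists (N^-1 * \sum_(z : Vec p m) gam (ext z) * (if z \in G then lam' (Eop K z) else 0)).
move=> v hv s.
rewrite (eq_bigr (fun t => N^-1 * (\sum_(z : Vec p m) gam (ext z) * Eop K z s t) * v t)); last first.
  move=> t _; rewrite {1}(pauli_exp pP rho s t); rewrite /N; congr (_ * _ * _).
  by apply: eq_bigr => z _; rewrite rho_beta.
transitivity (N^-1 * \sum_(z : Vec p m) gam (ext z) * opapp (Eop K z) v s).
  under eq_bigr do rewrite -mulrA; rewrite -mulr_sumr; congr (_ * _).
  under eq_bigr do rewrite mulr_suml; rewrite exchange_big; apply: eq_bigr => z _.
  by rewrite /opapp mulr_sumr; apply: eq_bigr => t _; rewrite mulrA.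
rewrite -mulrA mulr_suml; congr (_ * _); apply: eq_bigr => z _.
case: (boolP (z \in G)) => hz.
  by rewrite (hv _ (inS_E K hz)) mulrA.
have : ext z \notin C by apply: contra hz; exact: ext_sigma.
by move/gam0 => ->; rewrite !mul0r.
Qed.

Lemma rho_range u : inQ G lam' (fun s => \sum_t rho s t * u t).
Proof.
apply: (inQ_gen pP lam'_char) => z hz s'.
rewrite /opapp; under eq_bigr do rewrite mulr_sumr.
rewrite exchange_big mulr_sumr; apply: eq_bigr => t _.
rewrite mulrA -(rho_row hz s' t) mulr_suml; apply: eq_bigr => s _; by rewrite mulrA.
Qed.

Lemma main_result : completely_mixed (inQ G lam') rho.
Proof.
apply: spectral_mixed.
- move=> v w h hv E hE u; rewrite -h -(hv E hE u) /opapp; apply: eq_bigr => x _; by rewrite h.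
- exact: rho_herm.
- exact: rho_trace.
- exact: rho_range.
- move=> a v hv E hE u; rewrite /opapp (eq_bigr (fun w => a * (E u w * v w))); last by move=> w _; ring.
  by rewrite -mulr_sumr; have := hv E hE u; rewrite /opapp => ->; ring.
- exact: rho_eig.
Qed.

End Main.

End Aux.

Theorem lemma15 (K : numClosedFieldType) (p n : nat) (p_prime : prime p)
  (C : {set Vec p n}) (C_selfdual : C = sdual C)
  (J : {set 'I_n}) (J_ne0 : J != set0) (J_proper : J != [set: 'I_n])
  (lam : Op p K n -> K) (lam_char : is_char C lam)
  (lam' : Op p K #|J| -> K) (lam'_char : is_char (sigmaJ J C) lam')
  (compat : forall (z : Vec p #|J|) (y : Vec p n),
      z \in sigmaJ J C -> y \in C ->
      (forall j, j \notin J -> y j = (0, 0)) -> piJ J y = z ->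
      lam' (@Eop p K _ z) = lam (@Eop p K _ y))
  (phi : Basis p n -> K) (phi_in : inQ C lam phi)
  (phi_unit : \sum_x phi x * (phi x)^* = 1) :
  completely_mixed (inQ (sigmaJ J C) lam') (@ptrace p K n J (proj phi)).
Proof.
exact: (Aux.main_result p_prime C_selfdual lam'_char compat phi_in phi_unit).
Qed.
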